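(* For $n\ge 1$ let $\tau$ be a recursive tree of size $n$ chosen uniformly at random, and let $X_n$ be the number of distinct shapes (Pólya trees) among the fringe subtrees of $\tau$, i.e. the size of the compacted tree of $\tau$. Then \[ \mathbb{E}(X_n) = \mathcal{O}\!\left(\frac{n}{\log n}\right) \quad \text{as } n\to\infty . \]
   Context: A recursive tree of size $n$ is a rooted non-plane (unordered) tree with $n$ nodes carrying the distinct labels $1,\dots,n$ such that labels increase along every path from the root to a leaf; there are $(n-1)!$ of them. A Pólya tree is an unlabeled rooted non-plane tree; the shape of a (labeled) tree is the Pólya tree obtained by forgetting its labels. A fringe subtree of a rooted tree is a node together with all of its descendants. The compacted tree keeps one copy of each distinct fringe-subtree shape, so its size is the number of distinct fringe-subtree shapes. *)

(* Defs.v *)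
From Stdlib Require Import Reals.
From mathcomp Require Import all_boot.

Set Implicit Arguments.
Unset Strict Implicit.
Unset Printing Implicit Defensive.

(* A recursive tree of size n with labels 1..n is encoded on the nodes
   'I_n (node k has label k+1) by its parent map: the root 0 is its own
   parent, and every other node k has a parent of strictly smaller label.
   This is a bijection with recursive trees of size n ((n-1)! of them). *)
Definition parent_map (n : nat) := {ffun 'I_n -> 'I_n}.

Definition is_recursive_tree (n : nat) (par : parent_map n) : bool :=
  [forall k : 'I_n, if val k == 0 then par k == k else val (par k) < val k].

Definition recursive_trees (n : nat) : {set parent_map n} :=
  [set par | is_recursive_tree par].

Definition desc (n : nat) (par : parent_map n) (u w : 'I_n) : bool :=
  connect (frel par) w u.

(* The fringe subtrees rooted at u and v have the same shape (are
   isomorphic as rooted unordered unlabeled trees): there is a bijection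
   from the descendants of u onto the descendants of v sending u to v and
   commuting with the parent map. *)
Definition same_shape (n : nat) (par : parent_map n) (u v : 'I_n) : bool :=
  [exists f : {ffun 'I_n -> 'I_n},
    [&& f u == v,
        [forall w, [forall w', (desc par u w && desc par u w' && (f w == f w'))
                                 ==> (w == w')]],
        [forall w, desc par u w ==> desc par v (f w)],
        [forall z, desc par v z ==> [exists w, desc par u w && (f w == z)]]
      & [forall w, (desc par u w && (w != u)) ==> (f (par w) == par (f w))]]].

Definition num_shapes (n : nat) (par : parent_map n) : nat :=
  #|[set [set v | same_shape par u v] | u : 'I_n]|.

Definition expected_num_shapes (n : nat) : R :=
  Rdiv (INR (\sum_(par in recursive_trees n) num_shapes par)%N)
       (INR #|recursive_trees n|).

(* Main.v *)
Require Import Defs.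
From Stdlib Require Import Reals.
From mathcomp Require Import all_boot.
From Stdlib Require Import Lra.

Local Open Scope R_scope.
Lemma INR_expn2 m : INR (2 ^ m)%N = 2 ^ m.
Proof.
elim: m => [|m IH]; first by [].
by rewrite expnS -multE mult_INR IH /=.
Qed.

Lemma real_final (T Rn n t : nat) : (0 < Rn)%N -> (2 <= n)%N -> (n < 2 ^ t.+1)%N ->
  (T * t.+1 <= 16 * n * Rn)%N ->
  Rle (Rdiv (INR T) (INR Rn)) (Rmult 16 (Rdiv (INR n) (ln (INR n)))).
Proof.
move=> hR hn ht hT.
have hRr : (0 < INR Rn) by apply: lt_0_INR; apply/ltP.
have hnr : (2 <= INR n) by have := le_INR 2 n (elimT leP hn); rewrite /=; lra.
have hL : (0 < ln (INR n)) by rewrite -ln_1; apply: ln_increasing; lra.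
have ln2 : (ln 2 < 1).
  rewrite -{1}(ln_exp 1); apply: ln_increasing; first lra.
  have := exp_ineq1 1 ltac:(lra); lra.
have hLt : (ln (INR n) <= INR t.+1).
  have h1 : (INR n < 2 ^ t.+1).
    have := lt_INR _ _ (elimT ltP ht); rewrite INR_expn2; by [].
  have h2 := ln_increasing (INR n) _ ltac:(lra) h1.
  rewrite ln_pow in h2; last lra.
  have : (0 <= INR t.+1) by apply: pos_INR.
  nra.
have hTr : (INR T * INR t.+1 <= 16 * INR n * INR Rn).
  have := le_INR _ _ (elimT leP hT); rewrite -!multE !mult_INR.
  have -> : INR 16 = 16 by simpl; lra.
  by [].
have htr : (0 < INR t.+1) by lra.
apply: (Rle_trans _ (16 * INR n / INR t.+1)).
  apply: (Rmult_le_reg_r (INR Rn * INR t.+1)); first by apply: Rmult_lt_0_compat.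
  have -> : (INR T / INR Rn * (INR Rn * INR t.+1) = INR T * INR t.+1) by field; lra.
  have -> : (16 * INR n / INR t.+1 * (INR Rn * INR t.+1) = 16 * INR n * INR Rn) by field; lra.
  by [].
rewrite /Rdiv -Rmult_assoc; apply: Rmult_le_compat_l.
  have := pos_INR n; lra.
exact: Rinv_le_contravar.
Qed.

Local Close Scope R_scope.

From mathcomp Require Import all_algebra zify ring.
Set Implicit Arguments.
Unset Strict Implicit.
Unset Printing Implicit Defensive.

Lemma RTP n (par : parent_map n) :
  reflect (forall k : 'I_n, if (nat_of_ord k) == 0 then par k = k else (nat_of_ord (par k)) < (nat_of_ord k))
          (is_recursive_tree par).
Proof.
apply: (iffP forallP) => H k; have := H k; by case: ifP => // _ /eqP.
Qed.

Lemma par_le n (par : parent_map n) : is_recursive_tree par ->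
  forall w, (nat_of_ord (par w)) <= (nat_of_ord w).
Proof. move/RTP=> H w; have := H w; case: ifP => _; [by move->|exact: ltnW]. Qed.

Lemma par_lt n (par : parent_map n) : is_recursive_tree par ->
  forall w, par w != w -> (nat_of_ord (par w)) < (nat_of_ord w).
Proof.
move/RTP=> H w; have := H w; case: ifP => _ // -> ; by rewrite eqxx.
Qed.

Lemma par_lt0 n (par : parent_map n) : is_recursive_tree par ->
  forall w, (nat_of_ord w) != 0 -> (nat_of_ord (par w)) < (nat_of_ord w).
Proof. move/RTP=> H w; have := H w; by case: ifP. Qed.

Lemma iter_le n (par : parent_map n) : is_recursive_tree par ->
  forall k w, (nat_of_ord (iter k par w)) <= (nat_of_ord w).
Proof.
move=> hR; elim=> [|k IH] w //=; exact: leq_trans (par_le hR _) (IH w).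
Qed.

Lemma descP n (par : parent_map n) u w :
  reflect (exists k, iter k par w = u) (desc par u w).
Proof.
apply: (iffP idP).
  move=> h; exists (findex par w u); exact: iter_findex.
by case=> k <-; apply: fconnect_iter.
Qed.

Lemma desc_refl n (par : parent_map n) u : desc par u u.
Proof. exact: connect0. Qed.

Lemma desc_le n (par : parent_map n) : is_recursive_tree par ->
  forall u w, desc par u w -> (nat_of_ord u) <= (nat_of_ord w).
Proof. move=> hR u w /descP [k <-]; exact: iter_le. Qed.

Lemma desc_par n (par : parent_map n) u w :
  w != u -> desc par u w = desc par u (par w).
Proof.
move=> neq; apply/descP/descP => [[k hk]|[k hk]].
  case: k hk => [/= hk|k hk]; first by rewrite hk eqxx in neq.
  by exists k; rewrite -iterSr.
by exists k.+1; rewrite iterSr.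
Qed.

Lemma desc_trans n (par : parent_map n) u v w :
  desc par u v -> desc par v w -> desc par u w.
Proof. rewrite /desc => h1 h2; exact: connect_trans h2 h1. Qed.

Definition children n (par : parent_map n) (p : 'I_n) : seq 'I_n :=
  [seq c <- enum 'I_n | (par c == p) && (c != p)].

Lemma mem_children n (par : parent_map n) p c :
  (c \in children par p) = (par c == p) && (c != p).
Proof. by rewrite mem_filter mem_enum andbT. Qed.

Lemma uniq_children n (par : parent_map n) p : uniq (children par p).
Proof. by rewrite filter_uniq // enum_uniq. Qed.

Lemma child_lt n (par : parent_map n) : is_recursive_tree par ->
  forall p c, c \in children par p -> (nat_of_ord p) < (nat_of_ord c).
Proof.
move=> hR p c; rewrite mem_children => /andP [/eqP <- ne].
apply: par_lt => //; apply/negP => /eqP e; by rewrite -{1}e eqxx in ne.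
Qed.

Lemma desc_child n (par : parent_map n) p c w :
  c \in children par p -> desc par c w -> desc par p w.
Proof.
rewrite mem_children => /andP [/eqP hp _] hd; apply: desc_trans hd.
by apply/descP; exists 1.
Qed.

Inductive tree := Node of seq tree.

Fixpoint codeF n (par : parent_map n) (F : nat) (u : 'I_n) : tree :=
  match F with
  | 0 => Node [::]
  | F'.+1 => Node (map (codeF par F') (children par u))
  end.

Definition code n (par : parent_map n) u := codeF par n u.

Lemma codeF_stable n (par : parent_map n) : is_recursive_tree par ->
  forall F F' u, n - (nat_of_ord u) <= F -> n - (nat_of_ord u) <= F' -> codeF par F u = codeF par F' u.
Proof.
move=> hR; elim=> [|F IH] [|F'] u h1 h2 /=.
- by [].
- by move: h1; rewrite leqn0 subn_eq0 leqNgt ltn_ord.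
- by move: h2; rewrite leqn0 subn_eq0 leqNgt ltn_ord.
congr Node; apply/eq_in_map => c hc; apply: IH.
  have := child_lt hR hc; have := ltn_ord c; move: h1; clear; lia.
have := child_lt hR hc; have := ltn_ord c; move: h2; clear; lia.
Qed.

Lemma code_eq n (par : parent_map n) : is_recursive_tree par ->
  forall u, code par u = Node (map (code par) (children par u)).
Proof.
move=> hR u; rewrite /code.
case: n par hR u => [|n] par hR u; first by case: u.
have -> : codeF par n.+1 u = Node (map (codeF par n) (children par u)) by [].
congr Node; apply/eq_in_map => c hc; apply: (codeF_stable hR).
  have := child_lt hR hc; have := ltn_ord c; clear; lia.
by rewrite leq_subr.
Qed.

Fixpoint mF n (par : parent_map n) (u v : 'I_n) (F : nat) (w : 'I_n) : 'I_n :=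
  match F with
  | 0 => v
  | F'.+1 => if (w == u) || (nat_of_ord w == 0) then v
             else nth v (children par (mF par u v F' (par w)))
                        (index w (children par (par w)))
  end.

Lemma mF_stable n (par : parent_map n) u v : is_recursive_tree par ->
  forall F F' (w : 'I_n), w < F -> w < F' -> mF par u v F w = mF par u v F' w.
Proof.
move=> hR; elim=> [|F IH] [|F'] w h1 h2 //=.
case: ifP => // /norP [_ hw]; rewrite (IH F') //.
  have := par_lt0 hR hw; lia.
have := par_lt0 hR hw; lia.
Qed.

Definition mm n (par : parent_map n) u v w := mF par u v n w.

Lemma mm_u n (par : parent_map n) u v : mm par u v u = v.
Proof. rewrite /mm; case: n par u v => [|n] par u v; first by case: u. by rewrite /= eqxx. Qed.

Lemma mm_eq n (par : parent_map n) u v : is_recursive_tree par ->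
  forall w, w != u -> nat_of_ord w != 0 ->
  mm par u v w = nth v (children par (mm par u v (par w))) (index w (children par (par w))).
Proof.
move=> hR; rewrite /mm; case: n par u v hR => [|n] par u v hR w; first by case: w.
move=> h1 h2 /=; rewrite (negbTE h1) (negbTE h2) /=.
rewrite (@mF_stable _ par u v hR n n.+1) //.
have := par_lt0 hR h2; have := ltn_ord w; lia.
Qed.

Lemma root_desc n (par : parent_map n) : is_recursive_tree par ->
  forall u w, nat_of_ord w = 0 -> desc par u w -> u = w.
Proof.
move=> hR u w h0 /descP [k <-]; elim: k => //= k ->.
by move/RTP: hR => /(_ w); rewrite h0 eqxx.
Qed.

Lemma desc_ne0 n (par : parent_map n) : is_recursive_tree par ->
  forall u w, desc par u w -> w != u -> nat_of_ord w != 0.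
Proof.
move=> hR u w hd hne; apply/negP => /eqP h0.
by move: hne; rewrite (root_desc hR h0 hd) eqxx.
Qed.

Lemma child_par n (par : parent_map n) : is_recursive_tree par ->
  forall w, nat_of_ord w != 0 -> w \in children par (par w).
Proof.
move=> hR w hw; rewrite mem_children eqxx /=; apply/negP => /eqP e.
by have := par_lt0 hR hw; rewrite -e ltnn.
Qed.

Lemma strong_ind (P : nat -> Prop) :
  (forall m, (forall k, k < m -> P k) -> P m) -> forall m, P m.
Proof.
move=> H m; suff: forall N k, k < N -> P k by move/(_ m.+1 m); apply.
elim=> [|N IH] k hk //; apply: H => j hj; apply: IH; lia.
Qed.


Lemma iso_P1 n (par : parent_map n) u v : is_recursive_tree par ->
  code par u = code par v ->
  forall w, desc par u w ->
   code par (mm par u v w) = code par w /\ desc par v (mm par u v w) /\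
   (w != u -> mm par u v w \in children par (mm par u v (par w))).
Proof.
move=> hR huv w; move: {2}(nat_of_ord w) (erefl (nat_of_ord w)) => N.
elim/strong_ind: N w => N IH w hN hd.
case: (eqVneq w u) => [->|hne].
  by rewrite mm_u huv; split=> //; split=> //; apply: desc_refl.
have h0 := desc_ne0 hR hd hne.
have hpd : desc par u (par w) by rewrite -desc_par.
have hlt : nat_of_ord (par w) < N by rewrite -hN; apply: par_lt0.
have [c1 [d1 _]] := IH _ hlt (par w) (erefl _) hpd.
set p := par w in hpd c1 d1 *; set q := mm par u v p in c1 d1 *.
have hw : w \in children par p by apply: child_par.
have eqm : map (code par) (children par q) = map (code par) (children par p).
  by have := c1; rewrite (code_eq hR q) (code_eq hR p) => [[]].
have hsz : size (children par q) = size (children par p).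
  by rewrite -(size_map (code par)) eqm size_map.
have hi : index w (children par p) < size (children par q) by rewrite hsz index_mem.
have hm : mm par u v w = nth v (children par q) (index w (children par p)) by apply: mm_eq.
have hmc : mm par u v w \in children par q by rewrite hm mem_nth.
split; last split.
- rewrite hm -(nth_map v (code par v)) // eqm (nth_map w) ?index_mem //.
  by rewrite nth_index.
- exact: desc_trans d1 (desc_child hmc (desc_refl _ _)).
- by move=> _.
Qed.

Lemma iso_inj n (par : parent_map n) u v : is_recursive_tree par ->
  code par u = code par v ->
  forall w1 w2, desc par u w1 -> desc par u w2 ->
    mm par u v w1 = mm par u v w2 -> w1 = w2.
Proof.
move=> hR huv w1 w2; move: {2}(nat_of_ord w1 + nat_of_ord w2) (erefl (nat_of_ord w1 + nat_of_ord w2)) => N.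
elim/strong_ind: N w1 w2 => N IH w1 w2 hN hd1 hd2 heq.
have [_ [dv1 ch1]] := iso_P1 hR huv hd1.
have [_ [dv2 ch2]] := iso_P1 hR huv hd2.
have contra : forall w, desc par u w -> w != u -> mm par u v w <> v.
  move=> w hd hne hmv; have hpd : desc par u (par w) by rewrite -desc_par.
  have [_ [dvp _]] := iso_P1 hR huv hpd.
  have [_ [_ ch]] := iso_P1 hR huv hd; have := child_lt hR (ch hne).
  rewrite hmv; have := desc_le hR dvp; lia.
case: (eqVneq w1 u) => [e1|ne1]; case: (eqVneq w2 u) => [e2|ne2].
- by rewrite e1 e2.
- by exfalso; apply: (contra w2 hd2 ne2); rewrite -heq e1 mm_u.
- by exfalso; apply: (contra w1 hd1 ne1); rewrite heq e2 mm_u.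
have h01 := desc_ne0 hR hd1 ne1; have h02 := desc_ne0 hR hd2 ne2.
have c1 := ch1 ne1; have c2 := ch2 ne2.
have ep : par w1 = par w2.
  apply: (IH (nat_of_ord (par w1) + nat_of_ord (par w2))).
  - have := par_lt0 hR h01; have := par_lt0 hR h02; lia.
  - by [].
  - by rewrite -desc_par.
  - by rewrite -desc_par.
  - move: c1 c2; rewrite !mem_children heq => /andP [/eqP <- _] /andP [/eqP <- _] //.
have hw1 := child_par hR h01; have hw2 := child_par hR h02.
rewrite -ep in hw2.
have hpd : desc par u (par w1) by rewrite -desc_par.
have [c0 _] := iso_P1 hR huv hpd.
have hsz : size (children par (mm par u v (par w1))) = size (children par (par w1)).
  have := c0; rewrite (code_eq hR (mm _ _ _ _)) (code_eq hR (par w1)) => [[]] e.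
  by rewrite -(size_map (code par)) e size_map.
move: heq; rewrite (@mm_eq _ par u v hR w1 ne1 h01) (@mm_eq _ par u v hR w2 ne2 h02) -ep => /eqP.
rewrite nth_uniq ?uniq_children ?hsz ?index_mem // => /eqP ei.
by rewrite -(nth_index w1 hw1) -(nth_index w1 hw2) ei.
Qed.

Lemma iso_surj n (par : parent_map n) u v : is_recursive_tree par ->
  code par u = code par v ->
  forall z, desc par v z -> exists w, desc par u w /\ mm par u v w = z.
Proof.
move=> hR huv z; move: {2}(nat_of_ord z) (erefl (nat_of_ord z)) => N.
elim/strong_ind: N z => N IH z hN hd.
case: (eqVneq z v) => [->|hne].
  by exists u; split; [apply: desc_refl | apply: mm_u].
have h0 := desc_ne0 hR hd hne.
have hlt : nat_of_ord (par z) < N by rewrite -hN; apply: par_lt0.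
have hpd : desc par v (par z) by rewrite -desc_par.
have [w' [hw' hmw']] := IH _ hlt (par z) (erefl _) hpd.
have [c0 _] := iso_P1 hR huv hw'; rewrite hmw' in c0.
have hsz : size (children par (par z)) = size (children par w').
  have := c0; rewrite (code_eq hR (par z)) (code_eq hR w') => [[]] e.
  by rewrite -(size_map (code par)) e size_map.
have hz := child_par hR h0.
set i := index z (children par (par z)).
have hi : i < size (children par w') by rewrite -hsz index_mem.
set w := nth w' (children par w') i.
have hwc : w \in children par w' by apply: mem_nth.
have hlw := child_lt hR hwc.
have hdw : desc par u w by apply: desc_trans hw' (desc_child hwc (desc_refl _ _)).
have hwu : w != u by apply/eqP => e; have := desc_le hR hw'; rewrite -e; lia.
have hw0 : nat_of_ord w != 0 by apply/eqP => e; rewrite e in hlw.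
have hpw : par w = w' by move: hwc; rewrite mem_children => /andP [/eqP].
exists w; split => //.
rewrite (@mm_eq _ par u v hR w hwu hw0) hpw hmw' index_uniq ?uniq_children //.
by rewrite /i nth_index.
Qed.

Lemma code_same_shape n (par : parent_map n) u v : is_recursive_tree par ->
  code par u = code par v -> same_shape par u v.
Proof.
move=> hR huv; apply/existsP; exists [ffun w => mm par u v w].
apply/and5P; split.
- by rewrite ffunE mm_u.
- apply/forallP => w; apply/forallP => w'; apply/implyP => /andP [/andP [h1 h2] /eqP].
  by rewrite !ffunE => e; apply/eqP; apply: iso_inj e.
- apply/forallP => w; apply/implyP => hd; rewrite ffunE.
  by have [_ []] := iso_P1 hR huv hd.
- apply/forallP => z; apply/implyP => hd; have [w [h1 h2]] := iso_surj hR huv hd.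
  by apply/existsP; exists w; rewrite ffunE h1 h2 eqxx.
- apply/forallP => w; apply/implyP => /andP [hd hne]; rewrite !ffunE.
  have [_ [_ ch]] := iso_P1 hR huv hd.
  by move: (ch hne); rewrite mem_children => /andP [/eqP -> _].
Qed.

Lemma ss_trans n (par : parent_map n) u v w :
  same_shape par u v -> same_shape par v w -> same_shape par u w.
Proof.
move=> /existsP [f /and5P [/eqP fu /forallP fi /forallP fd /forallP fs /forallP fp]].
move=> /existsP [g /and5P [/eqP gu /forallP gi /forallP gd /forallP gs /forallP gp]].
have fi' : forall a b, desc par u a -> desc par u b -> f a = f b -> a = b.
  by move=> a b ha hb e; have /forallP/(_ b)/implyP := fi a; rewrite ha hb e eqxx => /(_ isT)/eqP.
have gi' : forall a b, desc par v a -> desc par v b -> g a = g b -> a = b.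
  by move=> a b ha hb e; have /forallP/(_ b)/implyP := gi a; rewrite ha hb e eqxx => /(_ isT)/eqP.
have fd' : forall a, desc par u a -> desc par v (f a) by move=> a; move/implyP: (fd a).
have gd' : forall a, desc par v a -> desc par w (g a) by move=> a; move/implyP: (gd a).
apply/existsP; exists [ffun a => g (f a)]; apply/and5P; split.
- by rewrite ffunE fu gu.
- apply/forallP => a; apply/forallP => b; apply/implyP => /andP [/andP [ha hb] /eqP].
  rewrite !ffunE => e; apply/eqP; apply: fi' => //; apply: gi' => //; exact: fd'.
- by apply/forallP => a; apply/implyP => ha; rewrite ffunE; apply/gd'/fd'.
- apply/forallP => z; apply/implyP => hz.
  have /existsP [y /andP [hy /eqP gy]] := implyP (gs z) hz.
  have /existsP [x /andP [hx /eqP fx]] := implyP (fs y) hy.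
  by apply/existsP; exists x; rewrite ffunE hx fx gy eqxx.
- apply/forallP => a; apply/implyP => /andP [ha hne]; rewrite !ffunE.
  have /eqP -> := implyP (fp a) (introT andP (conj ha hne)).
  apply: (implyP (gp (f a))); rewrite fd' //=.
  apply/negP => /eqP e; have : f a = f u by rewrite fu.
  by move/(fi' _ _ ha (desc_refl _ _)) => e'; rewrite e' eqxx in hne.
Qed.

Definition cls n (par : parent_map n) u := [set v | same_shape par u v].

Lemma code_cls n (par : parent_map n) u v : is_recursive_tree par ->
  code par u = code par v -> cls par u = cls par v.
Proof.
move=> hR e; apply/setP => w; rewrite !inE; apply/idP/idP => h.
  exact: ss_trans (code_same_shape hR (esym e)) h.
exact: ss_trans (code_same_shape hR e) h.
Qed.

Fixpoint enc (t : tree) : seq bool :=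
  match t with Node ts => true :: flatten (map enc ts) ++ [:: false] end.

Lemma encF_key N : forall ts ts' s s',
  size (flatten (map enc ts)) <= N ->
  flatten (map enc ts) ++ false :: s = flatten (map enc ts') ++ false :: s' ->
  ts = ts' /\ s = s'.
Proof.
elim: N => [|N IH] [|[a] ts1] [|[a'] ts1'] s s' //=; try by move=> _ [].
move=> hs /(congr1 behead) /= e; move: e; rewrite -!catA /= => e.
have h1 : size (flatten (map enc a)) <= N by move: hs; rewrite !size_cat /=; lia.
have h2 : size (flatten (map enc ts1)) <= N by move: hs; rewrite !size_cat /=; lia.
have [-> e2] := IH _ _ _ _ h1 e.
by have [-> ->] := IH _ _ _ _ h2 e2.
Qed.

Lemma enc_inj t t' : enc t = enc t' -> t = t'.
Proof.
case: t t' => [a] [a'] /= [] e.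
by have [-> _] := encF_key (leqnn _) e.
Qed.

Lemma size_enc ts : size (enc (Node ts)) = (\sum_(t <- ts) size (enc t)).+2.
Proof.
rewrite /= size_cat size_flatten /shape sumnE !big_map addn1 /=. done.
Qed.

Definition Ssz n (par : parent_map n) u := \sum_(w : 'I_n) (desc par u w : nat).

Lemma sum_count (T : eqType) (s : seq T) (P : pred T) :
  \sum_(c <- s) (P c : nat) = count P s.
Proof. by elim: s => [|x s IH]; rewrite ?big_nil ?big_cons ?IH. Qed.

Lemma desc_decomp n (par : parent_map n) : is_recursive_tree par ->
  forall u w, (desc par u w : nat) = (w == u) + \sum_(c <- children par u) (desc par c w : nat).
Proof.
move=> hR u w; rewrite sum_count.
case: (eqVneq w u) => [->|hne].
  rewrite desc_refl /=; suff -> : count ((desc par)^~ u) (children par u) = 0 by [].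
  apply/eqP; rewrite -leqn0 leqNgt -has_count.
  apply/hasP => [[c hc hd]]; have := desc_le hR hd; have := child_lt hR hc; lia.
rewrite add0n; case hd: (desc par u w); last first.
  apply/eqP; rewrite eq_sym -leqn0 leqNgt -has_count; apply/hasP => [[c hc hd']].
  by rewrite (desc_child hc hd') in hd.
have ex : exists k, iter k par w == u by move/descP: hd => [k hk]; exists k; rewrite hk.
case: (ex_minnP ex) => k /eqP hk hmin.
have k0 : 0 < k by case: k hk hmin => //= hk; rewrite hk eqxx in hne.
set c0 := iter k.-1 par w.
have hpc : par c0 = u by rewrite /c0 -iterS prednK.
have hc0 : c0 \in children par u.
  rewrite mem_children hpc eqxx /=; apply/negP => /eqP e.
  by have := hmin k.-1; rewrite -/c0 e eqxx => /(_ isT); lia.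
have uniq0 : forall c, c \in children par u -> desc par c w -> c = c0.
  move=> c hc /descP [j hj].
  have lt1 := child_lt hR hc; have lt0 := child_lt hR hc0.
  have hpc' : par c = u by move: hc; rewrite mem_children => /andP [/eqP].
  case: (ltngtP j k.-1) => hjk.
  - have : c0 = iter (k.-1 - j).-1 par u.
      rewrite -{1}hpc' -iterSr prednK ?subn_gt0 // -hj -iterD subnK //; lia.
    move=> e; have := iter_le hR (k.-1 - j).-1 u; rewrite -e; lia.
  - have : c = iter (j - k.-1).-1 par u.
      rewrite -{1}hpc -iterSr prednK ?subn_gt0 // /c0 -iterD subnK //; lia.
    move=> e; have := iter_le hR (j - k.-1).-1 u; rewrite -e; lia.
  - by rewrite /c0 -hj hjk.
rewrite (@eq_in_count _ _ (pred1 c0)).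
  by rewrite count_uniq_mem ?uniq_children // hc0.
move=> c hc /=; apply/idP/eqP => [h|->]; first exact: uniq0.
by apply/descP; exists k.-1.
Qed.

Lemma S_decomp n (par : parent_map n) : is_recursive_tree par ->
  forall u, Ssz par u = (\sum_(c <- children par u) Ssz par c).+1.
Proof.
move=> hR u; rewrite /Ssz (eq_bigr _ (fun w _ => desc_decomp hR u w)) big_split /=.
rewrite exchange_big /= -add1n; congr (_ + _).
rewrite (bigD1 u) //= eqxx big1 // => w /negbTE -> //.
Qed.

Lemma size_code n (par : parent_map n) : is_recursive_tree par ->
  forall u, size (enc (code par u)) = 2 * Ssz par u.
Proof.
move=> hR u; move: {2}(n - nat_of_ord u) (erefl (n - nat_of_ord u)) => N.
elim/strong_ind: N u => N IH u hN.
rewrite code_eq // size_enc big_map S_decomp // mulnS big_distrr /=.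
do 2 congr (_.+1); apply: eq_big_seq => c hc; apply: (IH (n - nat_of_ord c)) => //.
have := child_lt hR hc; have := ltn_ord c; lia.
Qed.

Definition numb (s : seq bool) : nat := foldr (fun (b : bool) acc => b + acc.*2) 1 s.

Lemma numb_pos s : 0 < numb s.
Proof. elim: s => //= b s IH; rewrite -addnn; lia. Qed.

Lemma numb_inj s s' : numb s = numb s' -> s = s'.
Proof.
elim: s s' => [|b s IH] [|b' s'] //=.
- have := numb_pos s'; rewrite -addnn; lia.
- have := numb_pos s; rewrite -addnn; lia.
move=> e; have eb : b = b'.
  have := congr1 odd e; rewrite !oddD !odd_double !addbF.
  by case: b {e}; case: b'.
subst b'; congr (_ :: _); apply: IH; move: e; rewrite -!addnn; case: b => /=; lia.
Qed.

Lemma numb_lt s : numb s < 2 ^ (size s).+1.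
Proof. elim: s => [|b s IH] //=; rewrite expnS -addnn; case: b => /=; lia. Qed.

Lemma partA n (par : parent_map n) : is_recursive_tree par -> forall k,
  num_shapes par <= 2 ^ (2 * k).+1 + #|[set u | k < Ssz par u]|.
Proof.
move=> hR k.
set A := [set u | Ssz par u <= k].
have -> : num_shapes par = #|cls par @: (A :|: ~: A)|.
  rewrite /num_shapes setUCr; apply: eq_card => X.
  apply/imsetP/imsetP => [[u _ ->]|[u _ ->]]; by exists u.
rewrite imsetU; apply: leq_trans (leq_card_setU _ _).1 _; apply: leq_add.
  set N := (2 ^ (2 * k).+1).-1.
  have hN : 2 ^ (2 * k).+1 = N.+1 by rewrite prednK // expn_gt0.
  rewrite hN.
  pose h (X : {set 'I_n}) : 'I_N.+1 :=
    if [pick u in A | cls par u == X] is Some u then inord (numb (enc (code par u))) else ord0.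
  have -> : N.+1 = #|'I_N.+1| by rewrite card_ord.
  apply: (@leq_card_in _ _ h) => X Y /imsetP [x hx ->] /imsetP [y hy ->].
  rewrite /h; case: pickP => [u /andP [hu /eqP hux]|/(_ x)]; last by rewrite hx eqxx.
  case: pickP => [v /andP [hv /eqP hvy]|/(_ y)]; last by rewrite hy eqxx.
  have bnd : forall w, w \in A -> numb (enc (code par w)) <= N.
    move=> w; rewrite inE => hw; have := numb_lt (enc (code par w)).
    rewrite size_code // => h1; rewrite -ltnS -hN; apply: leq_trans h1 _.
    by rewrite leq_exp2l // ltnS leq_mul2l hw orbT.
  move/(congr1 val); rewrite /= !inordK ?ltnS ?bnd // => /numb_inj/enc_inj e.
  by rewrite -hux -hvy; apply: code_cls.
apply: leq_trans (leq_imset_card _ _) _; apply: subset_leq_card.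
by apply/subsetP => u; rewrite !inE -ltnNge.
Qed.

Definition upd n (q : parent_map n) (i a : 'I_n) : parent_map n :=
  [ffun x => if x == i then a else q x].

Lemma upd_RT n (q : parent_map n) (i a b : 'I_n) : 0 < i -> a < i -> b < i ->
  (upd q i a \in recursive_trees n) = (upd q i b \in recursive_trees n).
Proof.
move=> i0 ai bi; rewrite !inE; apply/RTP/RTP => H x; have := H x; rewrite !ffunE;
  case: (eqVneq x i) => [->|//]; rewrite (negbTE (lt0n_neq0 i0)) //.
Qed.

Lemma upd_id n (q : parent_map n) i : upd q i (q i) = q.
Proof. by apply/ffunP => x; rewrite ffunE; case: eqP => // ->. Qed.

Lemma upd_upd n (q : parent_map n) i a b : upd (upd q i a) i b = upd q i b.
Proof. by apply/ffunP => x; rewrite !ffunE; case: eqP. Qed.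

Lemma upd_at n (q : parent_map n) i a : upd q i a i = a.
Proof. by rewrite ffunE eqxx. Qed.

Lemma RT_lt n (q : parent_map n) (i : 'I_n) : q \in recursive_trees n -> 0 < i -> q i < i.
Proof. rewrite inE => /RTP /(_ i); case: ifP => //; lia. Qed.

Lemma reindex_upd n (F : parent_map n -> nat) (i a b : 'I_n) : 0 < i -> a < i -> b < i ->
  \sum_(q | (q \in recursive_trees n) && (q i == b)) F (upd q i a) =
  \sum_(q | (q \in recursive_trees n) && (q i == a)) F q.
Proof.
move=> i0 ai bi; symmetry.
rewrite (reindex_onto (fun q => upd q i a) (fun q => upd q i b)) /=; last first.
  by move=> q /andP [_ /eqP <-]; rewrite upd_upd upd_id.
apply: eq_bigl => q; rewrite upd_at eqxx andbT upd_upd.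
apply/andP/andP => [[h1 /eqP h2]|[h1 /eqP h2]].
  by rewrite -h2 upd_at eqxx -(upd_RT q i0 ai bi).
split; last by rewrite -h2 upd_id.
by rewrite (upd_RT q i0 ai bi) -h2 upd_id.
Qed.

Lemma card_lt n m : m <= n -> #|[set a : 'I_n | a < m]| = m.
Proof.
move=> hm; have -> : [set a : 'I_n | a < m] = [set widen_ord hm x | x : 'I_m].
  apply/setP => a; rewrite !inE; apply/idP/imsetP => [h|[x _ ->]]; last by rewrite /= ltn_ord.
  by exists (Ordinal h) => //; apply: val_inj.
rewrite card_imset ?card_ord //; by move=> x y /(congr1 val) /= e; apply: val_inj.
Qed.

Lemma averaging n (F : parent_map n -> nat) (i : 'I_n) : 0 < i ->
  \sum_(q in recursive_trees n) \sum_(a : 'I_n | a < i) F (upd q i a) =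
  #|[set a : 'I_n | a < i]| * \sum_(q in recursive_trees n) F q.
Proof.
move=> i0; rewrite exchange_big /=.
rewrite (partition_big (fun q : parent_map n => q i) (fun a : 'I_n => a < i)) /=;
  last by move=> q hq; apply: RT_lt.
rewrite big_distrr /=; apply: eq_bigr => a ai.
rewrite (partition_big (fun q : parent_map n => q i) (fun b : 'I_n => b < i)) /=;
  last by move=> q hq; apply: RT_lt.
rewrite (eq_bigr (fun b => \sum_(q | (q \in recursive_trees n) && (q i == a)) F q)); last first.
  by move=> b bi; apply: reindex_upd.
rewrite (eq_bigl (fun b => b \in [set b : 'I_n | b < i])) ?sum_nat_const // => b; by rewrite inE.
Qed.

Definition St n (par : parent_map n) u t := \sum_(w : 'I_n | w <= t) (desc par u w : nat).

Lemma iter_agree n (q q' : parent_map n) (i : 'I_n) : q \in recursive_trees n ->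
  (forall x : 'I_n, x < i -> q' x = q x) ->
  forall w : 'I_n, w < i -> forall k, iter k q' w = iter k q w.
Proof.
rewrite inE => hR hag w wi; elim=> [|k IH] //=; rewrite IH hag //.
exact: leq_ltn_trans (iter_le hR _ _) wi.
Qed.

Lemma desc_agree n (q q' : parent_map n) (i : 'I_n) : q \in recursive_trees n ->
  (forall x : 'I_n, x < i -> q' x = q x) ->
  forall u (w : 'I_n), w < i -> desc q' u w = desc q u w.
Proof.
move=> hR hag u w wi; apply/descP/descP => [[k hk]|[k hk]]; exists k;
  by rewrite -hk (iter_agree hR hag wi).
Qed.

Lemma St_upd n (q : parent_map n) (i : 'I_n) (u a : 'I_n) t :
  q \in recursive_trees n -> nat_of_ord i = t.+1 -> u <= t -> a < i ->
  St (upd q i a) u t.+1 = St q u t + desc q u a.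
Proof.
move=> hR hi ut ai.
have hag : forall x : 'I_n, x < i -> upd q i a x = q x.
  by move=> x xi; rewrite ffunE; case: eqP => // e; rewrite e ltnn in xi.
rewrite /St (bigD1 i) /=; last by rewrite hi.
rewrite addnC; congr (_ + _).
  apply: eq_big => w.
    apply/andP/idP => [[h1 h2]|h]; last first.
      by split; [lia | apply/negP => /eqP e; rewrite e hi in h; lia].
    have : nat_of_ord w != nat_of_ord i by [].
    by move: h1; rewrite hi; lia.
  move=> /andP [h1 h2]; have h3 : nat_of_ord w != nat_of_ord i by []. rewrite (@desc_agree n q (upd q i a) i hR hag u w) //; move: h1 h3; rewrite hi; lia.
rewrite desc_par; last by apply/negP => /eqP e; move: ut; rewrite -e hi; lia.
by rewrite upd_at (desc_agree hR hag).
Qed.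

Lemma sum_split_bool n (P D : pred 'I_n) (g : bool -> nat) :
  \sum_(a | P a) g (D a) =
    (\sum_(a | P a) (D a : nat)) * g true + (\sum_(a | P a) (~~ D a : nat)) * g false.
Proof.
rewrite !big_distrl -big_split /=; apply: eq_bigr => a _; by case: (D a); rewrite /= ?mul1n ?mul0n ?addn0.
Qed.

Lemma St_step n (u : 'I_n) t (ht : t.+1 < n) : u <= t ->
  t.+1 * \sum_(q in recursive_trees n) (St q u t.+1 * (St q u t.+1).+1) =
  t.+3 * \sum_(q in recursive_trees n) (St q u t * (St q u t).+1).
Proof.
move=> ut; pose i := Ordinal ht.
have hcard : #|[set a : 'I_n | a < i]| = t.+1 by rewrite card_lt // ltnW.
rewrite -hcard -averaging //= hcard big_distrr /=.
apply: eq_bigr => q hq.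
rewrite (eq_bigr (fun a => (fun b : bool => (St q u t + b) * (St q u t + b).+1) (desc q u a))); last first.
  move=> a ai; by rewrite (@St_upd n q i u a t hq (erefl _) ut ai).
have := sum_split_bool (fun a : 'I_n => a < t.+1) (fun a => desc q u a)
  (fun b : bool => (St q u t + b) * (St q u t + b).+1).
rewrite /= => ->.
set c1 := \sum_(a | _) _; set c0 := \sum_(a | _) _.
have hc1 : c1 = St q u t.
  rewrite /c1 /St; apply: eq_bigl => a /=; lia.
have hc : c1 + c0 = t.+1.
  rewrite /c1 /c0 -big_split /= (eq_bigr (fun _ => 1)); last by move=> a _; case: (desc q u a).
  rewrite -[in RHS]hcard -sum1_card; by apply: eq_bigl => a; rewrite inE.
rewrite -hc hc1; rewrite hc1 in hc; set s := St q u t in hc *.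
rewrite /= addn0 addn1; nia.
Qed.

Lemma St_base n (q : parent_map n) (u : 'I_n) : q \in recursive_trees n -> St q u u = 1.
Proof.
rewrite inE => hR; rewrite /St (bigD1 u) //= desc_refl big1 // => w /andP [h1 h2].
apply/eqP; rewrite eqb0; apply/negP => hd; have := desc_le hR hd.
have h3 : nat_of_ord w != nat_of_ord u by [].
move: h1 h3; lia.
Qed.

Lemma St_formula n (u : 'I_n) d : u + d < n ->
  u.+1 * u.+2 * \sum_(q in recursive_trees n) (St q u (u + d) * (St q u (u + d)).+1) =
  2 * #|recursive_trees n| * (u + d).+1 * (u + d).+2.
Proof.
elim: d => [|d IH] hd.
  rewrite addn0 (eq_bigr (fun _ => 2)); last by move=> q hq; rewrite St_base.
  rewrite sum_nat_const; lia.
have ht : (u + d).+1 < n by lia.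
have e := St_step ht (leq_addr d u).
have e2 := IH (ltnW ht).
rewrite addnS; apply/eqP; rewrite -(eqn_pmul2l (ltn0Sn (u + d))) ; apply/eqP.
rewrite mulnCA e mulnCA e2.
set R := #|recursive_trees n|; set t := u + d.
ring.
Qed.

Lemma S_formula n (u : 'I_n) :
  u.+1 * u.+2 * \sum_(q in recursive_trees n) (Ssz q u * (Ssz q u).+1) =
  2 * #|recursive_trees n| * n * n.+1.
Proof.
have hn : u + (n.-1 - u) < n by have := ltn_ord u; lia.
have := St_formula hn; have -> : u + (n.-1 - u) = n.-1 by have := ltn_ord u; lia.
have -> : (n.-1).+1 = n by have := ltn_ord u; lia.
move=> <-; congr (_ * _); apply: eq_bigr => q _.
have -> // : St q u n.-1 = Ssz q u.
rewrite /St /Ssz; apply: eq_bigl => w; have := ltn_ord w; lia.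
Qed.

Lemma tele (f : nat -> nat) M Q L :
  (forall u, M <= u -> u < L -> u.+1 * u.+2 * f u <= Q) ->
  M.+1 * L.+1 * \sum_(0 <= u < L) ((M <= u) * f u) <= Q * (L - M).
Proof.
elim: L => [|L IH] hf; first by rewrite big_geq ?muln0.
rewrite big_nat_recr //=.
have IH' := IH (fun u h1 h2 => hf u h1 (ltnW h2)).
set s := \sum_(0 <= u < L) _ in IH' *.
case: (leqP M L) => hML; last first.
  have s0 : s = 0.
    move: IH'; rewrite (_ : L - M = 0) ?muln0; last by lia.
    by rewrite leqn0 !muln_eq0 => /orP [/orP [] |/eqP] //.
  by rewrite s0 /= mul0n addn0 muln0.
rewrite /= mul1n.
have hL := hf L hML (ltnSn L).
rewrite -(@leq_pmul2l L.+1) //.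
apply: (@leq_trans (L.+2 * (M.+1 * L.+1 * s) + M.+1 * (L.+1 * L.+2 * f L))).
  rewrite mulnDr; apply: eq_leq; ring.
apply: (@leq_trans (L.+2 * (Q * (L - M)) + M.+1 * Q)).
  by apply: leq_add; [rewrite leq_mul2l IH' orbT | rewrite leq_mul2l hL orbT].
apply: eq_leq; have -> : L.+1 - M = (L - M).+1 by lia.
have [d ->] : exists d, L = M + d by exists (L - M); lia.
rewrite addKn; ring.
Qed.

Lemma card_sum_ind (T : finType) (P : pred T) : #|[set u | P u]| = \sum_(u : T) (P u : nat).
Proof.
rewrite -sum1_card big_mkcond /=; apply: eq_bigr => u _; rewrite inE; by case: (P u).
Qed.

Lemma sum_ord_nat n (g : 'I_n -> nat) (h : nat -> nat) :
  \sum_(u : 'I_n) h u * g u =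
  \sum_(0 <= x < n) h x * \sum_(v : 'I_n | nat_of_ord v == x) g v.
Proof.
rewrite big_mkord; apply: eq_bigr => u _; congr (_ * _).
by rewrite (big_pred1 u) // => v /=; rewrite -val_eqE.
Qed.

Lemma sum_lt_M n M : \sum_(u : 'I_n) (u < M : nat) <= M.
Proof.
rewrite (_ : \sum_(u : 'I_n) (u < M : nat) = \sum_(0 <= x < n) (x < M : nat)); last by rewrite big_mkord.
elim: n => [|n IH]; first by rewrite big_geq.
rewrite big_nat_recr //=.
case: (ltnP n M) => h /=.
  suff : \sum_(0 <= x < n) (x < M : nat) = n by move->; lia.
  rewrite (eq_big_nat _ _ (F2 := fun _ => 1)) ?sum_nat_const_nat ?subn0 ?muln1 //.
  by move=> i /andP [_ hi]; rewrite (_ : i < M) //; lia.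
by rewrite addn0.
Qed.

Lemma partB n k M :
  k.+1 * k.+2 * M.+1 * \sum_(q in recursive_trees n) #|[set u | k < Ssz q u]| <=
  k.+1 * k.+2 * M.+1 * (M * #|recursive_trees n|) + 2 * #|recursive_trees n| * n * n.+1.
Proof.
set R := #|recursive_trees n|.
pose B (u : 'I_n) := \sum_(q in recursive_trees n) (k < Ssz q u : nat).
pose A (u : 'I_n) := \sum_(q in recursive_trees n) (Ssz q u * (Ssz q u).+1).
have -> : \sum_(q in recursive_trees n) #|[set u | k < Ssz q u]| = \sum_(u : 'I_n) B u.
  rewrite (eq_bigr (fun q => \sum_(u : 'I_n) (k < Ssz q u : nat))); last first.
    by move=> q _; rewrite card_sum_ind.
  by rewrite exchange_big.
have hB : forall u, B u = (u < M) * B u + (M <= u) * B u.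
  by move=> u; case: (ltnP u M) => h; rewrite /= ?mul1n ?mul0n ?addn0.
rewrite (eq_bigr _ (fun u _ => hB u)) big_split /= mulnDr.
apply: leq_add.
  rewrite leq_mul2l; apply/orP; right.
  apply: (@leq_trans (\sum_(u : 'I_n) (u < M) * R)).
    apply: leq_sum => u _; rewrite leq_mul2l; apply/orP; right.
    rewrite /R -sum1_card; apply: leq_sum => q _; by case: (k < Ssz q u).
  by rewrite -big_distrl /= leq_mul2r sum_lt_M orbT.
apply: (@leq_trans (M.+1 * \sum_(u : 'I_n) (M <= u) * A u)).
  rewrite -mulnA [k.+1 * _ * _]mulnC -mulnA leq_mul2l; apply/orP; right.
  rewrite big_distrl /=; apply: leq_sum => u _.
  rewrite -mulnA leq_mul2l; apply/orP; right; rewrite mulnC.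
  rewrite /B /A big_distrr /=; apply: leq_sum => q _.
  case: (ltnP k (Ssz q u)) => h /=; last by rewrite muln0.
  rewrite muln1; apply: leq_mul => //; lia.
rewrite (sum_ord_nat A (fun x => (M <= x : nat))).
set G := fun x => \sum_(v : 'I_n | nat_of_ord v == x) A v.
have hG : forall x, M <= x -> x < n -> x.+1 * x.+2 * G x <= 2 * R * n * n.+1.
  move=> x _ hx; rewrite /G (big_pred1 (Ordinal hx)); last by move=> v /=; rewrite -val_eqE.
  by rewrite /A (S_formula (Ordinal hx)).
have := tele hG.
set s := \sum_(0 <= u < n) _ => ht.
rewrite -(@leq_pmul2r n.+1) //; rewrite [_ * s * _]mulnAC; apply: leq_trans ht _.
rewrite leq_mul2l; apply/orP; right; lia.
Qed.

Lemma pow_bound t : 2 ^ (2 * (t %/ 4)).+1 * t.+1 <= 4 * 2 ^ t.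
Proof.
set a := t %/ 4; set r := t %% 4.
have ht : t = 4 * a + r by rewrite /a /r mulnC -divn_eq.
have hX : 2 * a < 2 ^ (2 * a) by apply: ltn_expl.
have hY : r < 2 ^ r by apply: ltn_expl.
set X := 2 ^ (2 * a) in hX; set Y := 2 ^ r in hY.
have -> : 2 ^ t = X * X * Y by rewrite ht /X /Y -!expnD; congr (2 ^ _); lia.
rewrite expnS -/X ht; nia.
Qed.

Lemma total_nat n : 0 < n ->
  (\sum_(q in recursive_trees n) num_shapes q) * (trunc_log 2 n).+1 <=
  16 * n * #|recursive_trees n|.
Proof.
move=> n0; set t := trunc_log 2 n; set k := t %/ 4; set M := n %/ k.+1.
set R := #|recursive_trees n|; set T := \sum_(q in _) _.
set P := k.+1 * k.+2 * M.+1.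
have hP : 0 < P by rewrite /P !muln_gt0.
have hT : T <= R * 2 ^ (2 * k).+1 + \sum_(q in recursive_trees n) #|[set u | k < Ssz q u]|.
  rewrite /T /R; apply: (@leq_trans (\sum_(q in recursive_trees n) (2 ^ (2*k).+1 + #|[set u | k < Ssz q u]|))).
    apply: leq_sum => q; rewrite inE => hq; exact: partA hq k.
  by rewrite big_split /= sum_nat_const mulnC.
have hB := partB n k M.
set Bs := \sum_(q in recursive_trees n) _ in hT hB.
have ha : 2 ^ (2 * k).+1 * t.+1 <= 4 * n.
  apply: leq_trans (pow_bound t) _; rewrite leq_mul2l trunc_logP //.
have htk : t.+1 <= 4 * k.+1 by rewrite /k; have := divn_eq t 4; have := ltn_pmod t (isT : 0 < 4); lia.
have hM1 : M * k.+1 <= n by rewrite /M leq_divM.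
have hM2 : n < M.+1 * k.+1 by rewrite /M ltn_ceil.
rewrite -(@leq_pmul2l P) //.
apply: (@leq_trans (P * (R * 2 ^ (2 * k).+1 + Bs) * t.+1)).
  by rewrite mulnA leq_mul2r leq_mul2l hT !orbT.
rewrite mulnDr mulnDl.
have e1 : P * (R * 2 ^ (2 * k).+1) * t.+1 <= P * (4 * n * R).
  rewrite -mulnA leq_mul2l -mulnA [4 * n * R]mulnC leq_mul2l ha !orbT //.
have e2 : P * Bs * t.+1 <= (P * (M * R) + 2 * R * n * n.+1) * t.+1 by rewrite leq_mul2r hB orbT.
have e3 : P * (M * R) * t.+1 <= P * (4 * n * R).
  rewrite -mulnA leq_mul2l; apply/orP; right.
  have h : M * t.+1 <= 4 * n.
    apply: (@leq_trans (M * (4 * k.+1))); first by rewrite leq_mul2l htk orbT.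
    rewrite mulnCA leq_mul2l; apply/orP; right; move: hM1; rewrite mulnC; apply.
  by rewrite mulnAC leq_mul2r h orbT.
have e4 : 2 * R * n * n.+1 * t.+1 <= P * (8 * n * R).
  have h1 : n.+1 * t.+1 <= (M.+1 * k.+1) * (4 * k.+2).
    apply: leq_mul => //; apply: leq_trans htk _; lia.
  apply: (@leq_trans ((2 * R * n) * (n.+1 * t.+1))); first by apply: eq_leq; ring.
  apply: (@leq_trans ((2 * R * n) * ((M.+1 * k.+1) * (4 * k.+2)))); first by rewrite leq_mul2l h1 orbT.
  apply: eq_leq; rewrite /P; ring.
apply: leq_trans (leq_add e1 (leq_trans e2 _)) _.
  rewrite mulnDl; exact: leq_add e3 e4.
apply: eq_leq; ring.
Qed.

Lemma RT_nonempty n : (0 < n)%N -> (0 < #|recursive_trees n|)%N.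
Proof.
case: n => // n _; apply/card_gt0P; exists [ffun k : 'I_n.+1 => ord0].
rewrite inE; apply/RTP => k; rewrite ffunE; case: ifP => /eqP h.
  by apply: val_inj; rewrite /= h.
by rewrite /=; lia.
Qed.

Theorem theorem2p8 :
  exists (C : R) (N : nat), forall n : nat, (N <= n)%N ->
    Rle (expected_num_shapes n) (Rmult C (Rdiv (INR n) (ln (INR n)))).
Proof.
exists (IZR 16), 2 => n hn; rewrite /expected_num_shapes.
have n0 : (0 < n)%N by lia.
apply: (@real_final _ _ _ (trunc_log 2 n)) => //.
- exact: RT_nonempty.
- exact: trunc_log_ltn.
- exact: total_nat.
Qed.
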